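(* Let $A\in\mathbb{R}^{d\times d}$, $B\in\mathbb{R}^{d\times n}$, $C\in\mathbb{R}^{n\times d}$, $D\in\mathbb{R}^{n\times n}$ with every eigenvalue of $A$ in the closed left half-plane, and let $H(\xi)=D+C(\xi I-A)^{-1}B$. Let $X\in\mathbb{R}^{d\times d}$ be symmetric and let $L,W$ be real matrices (with the same number of rows) satisfying $-A^TX-XA=L^TL$, $C-B^TX=W^TL$ and $D+D^T=W^TW$. Let $$Z(\xi)=W+L(\xi I-A)^{-1}B,\qquad Y(\xi)=\begin{bmatrix}\xi I-A & -B\\ L & W\end{bmatrix}.$$ Then $Z^\star Z=H+H^\star$, and $Z$ is a spectral factor of $H+H^\star$ if and only if $Y(\lambda)$ has full row rank for all $\lambda\in\mathbb{C}$ with $\mathrm{Re}(\lambda)>0$.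
   Context: For a real rational matrix $G$, $G^\star(\xi):=G(-\xi)^T$. If $Z\in\mathbb{R}^{r\times n}(\xi)$ and $F=Z^\star Z$, $Z$ is called a spectral factor of $F$ if $Z$ is analytic in the open right half-plane and $Z(\lambda)$ has full row rank for every $\lambda$ in the open right half-plane. *)

(* Defs.v *)
From HB Require Import structures.
From mathcomp Require Import all_boot all_order all_algebra.
From mathcomp Require Import generic_quotient fraction.
From mathcomp Require Import complex.
Set Implicit Arguments. Unset Strict Implicit. Unset Printing Implicit Defensive.
Import Order.TTheory GRing.Theory Num.Theory.
Local Open Scope ring_scope.

Notation "x %:F" := (@FracField.tofrac _ x).

Definition ratf (R : rcfType) := {fraction {poly R}}.

Definition xi_rf (R : rcfType) : ratf R := ('X)%:F.

Definition cmx (R : rcfType) m n (M : 'M[R]_(m, n)) : 'M[ratf R]_(m, n) :=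
  map_mx (fun x => (x%:P)%:F) M.

Definition cplx_mx (R : rcfType) m n (M : 'M[R]_(m, n)) : 'M[R[i]]_(m, n) :=
  map_mx (fun x => (x%:C)%C) M.

Definition ceval (R : rcfType) (p : {poly R}) (z : R[i]) : R[i] :=
  (map_poly (fun x => (x%:C)%C) p).[z].

Definition rf_neg (R : rcfType) (f : ratf R) : ratf R :=
  let r := repr f in
  ((\n_r \Po - 'X)%:F) / ((\d_r \Po - 'X)%:F).

Definition mxstar (R : rcfType) m n (G : 'M[ratf R]_(m, n)) : 'M[ratf R]_(n, m) :=
  (map_mx (@rf_neg R) G)^T.

(* The rational function f is analytic at z and takes value v there:
   f = p/q with q(z) <> 0 and v = p(z)/q(z). *)
Definition rf_value_at (R : rcfType) (f : ratf R) (z : R[i]) (v : R[i]) : Prop :=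
  exists p q : {poly R},
    [/\ ceval q z != 0, f = p%:F / q%:F & v = ceval p z / ceval q z].

Definition rmx_value_at (R : rcfType) m n (Z : 'M[ratf R]_(m, n))
  (z : R[i]) (M : 'M[R[i]]_(m, n)) : Prop :=
  forall i j, rf_value_at (Z i j) z (M i j).

Definition spectral_factor (R : rcfType) r n (Z : 'M[ratf R]_(r, n))
  (F : 'M[ratf R]_(n, n)) : Prop :=
  mxstar Z *m Z = F /\
  forall lam : R[i], 0 < Re lam ->
    exists M : 'M[R[i]]_(r, n), rmx_value_at Z lam M /\ \rank M = r.

Definition tf (R : rcfType) d m n (A : 'M[R]_d) (B : 'M[R]_(d, n))
  (C : 'M[R]_(m, d)) (D : 'M[R]_(m, n)) : 'M[ratf R]_(m, n) :=
  cmx D + cmx C *m invmx ((xi_rf R)%:M - cmx A) *m cmx B.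

(* Main.v *)
Require Import Defs.
From HB Require Import structures.
From mathcomp Require Import all_boot all_order all_algebra.
From mathcomp Require Import generic_quotient fraction.
From mathcomp Require Import complex.
Import Order.TTheory GRing.Theory Num.Theory.
Local Open Scope ring_scope.

Module Helpers.
Set Implicit Arguments. Unset Strict Implicit. Unset Printing Implicit Defensive.
Local Open Scope quotient_scope.
Lemma pi_frac (T : idomainType) (x : {ratio T}) :
  \pi_({fraction T}) x = (\n_x)%:F / (\d_x)%:F.
Proof.
have tofE (a : T) : a%:F = \pi_({fraction T}) (Ratio a 1).
  by rewrite /FracField.tofrac; unlock.
rewrite !tofE.
have -> : ((\pi_({fraction T}) (Ratio \d_x 1))^-1) = \pi_({fraction T}) (FracField.invf (Ratio \d_x 1)).
  by rewrite FracField.pi_inv.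
rewrite -[_ * _]FracField.pi_mul.
congr (\pi _).
rewrite /FracField.mulf /FracField.invf !numden_Ratio ?oner_neq0 ?denom_ratioP //.
by rewrite mulr1 mul1r Ratio_numden.
Qed.

Lemma frac_repr (T : idomainType) (f : {fraction T}) :
  f = (\n_(repr f))%:F / (\d_(repr f))%:F.
Proof. by rewrite -pi_frac reprK. Qed.

Section RfNeg.
Variable R : rcfType.
Local Notation F := {fraction {poly R}}.
Definition ng (p : {poly R}) := p \Po - 'X.

Lemma ngK p : ng (ng p) = p.
Proof.
rewrite /ng -comp_polyA.
by rewrite -scaleN1r comp_polyZ comp_polyX scalerA mulrNN mulr1 scale1r comp_polyXr.
Qed.

Lemma ng_eq0 p : (ng p == 0) = (p == 0).
Proof.
apply/eqP/eqP => [h|->]; last by rewrite /ng comp_poly0.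
by rewrite -[p]ngK h /ng comp_poly0.
Qed.

Lemma ngM p q : ng (p * q) = ng p * ng q.
Proof. by rewrite /ng comp_polyM. Qed.
Lemma ngD p q : ng (p + q) = ng p + ng q.
Proof. by rewrite /ng comp_polyD. Qed.

Lemma frac_ex (f : F) : exists p q, q != 0 /\ f = p%:F / q%:F.
Proof. by exists \n_(repr f), \d_(repr f); split; [apply: denom_ratioP | apply: frac_repr]. Qed.

Lemma rf_negE (p q : {poly R}) : q != 0 ->
  @rf_neg R (p%:F / q%:F) = (ng p)%:F / (ng q)%:F.
Proof.
move=> q0; rewrite /rf_neg.
set f := p%:F / q%:F.
have e := frac_repr f.
have d0 : \d_(repr f) != 0 by apply: denom_ratioP.
move: e; rewrite {1}/f => /eqP.
rewrite eqr_div ?tofrac_eq0 // -!tofracM tofrac_eq => /eqP e.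
apply/eqP; rewrite eqr_div ?tofrac_eq0 ?ng_eq0 // -!tofracM tofrac_eq.
by rewrite -!ngM mulrC e mulrC.
Qed.

Lemma rf_negD (f g : F) : @rf_neg R (f + g) = rf_neg f + rf_neg g.
Proof.
have [p [q [q0 ->]]] := frac_ex f; have [p' [q' [q0' ->]]] := frac_ex g.
rewrite addf_div ?tofrac_eq0 // -!tofracM -tofracD !rf_negE ?mulf_neq0 //.
by rewrite addf_div ?tofrac_eq0 ?ng_eq0 // -!tofracM -tofracD ngD !ngM.
Qed.

Lemma rf_negM (f g : F) : @rf_neg R (f * g) = rf_neg f * rf_neg g.
Proof.
have [p [q [q0 ->]]] := frac_ex f; have [p' [q' [q0' ->]]] := frac_ex g.
rewrite mulf_div -!tofracM !rf_negE ?mulf_neq0 //.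
by rewrite mulf_div -!tofracM !ngM.
Qed.

Lemma rf_negC (p : {poly R}) : @rf_neg R (p%:F) = (ng p)%:F.
Proof.
by rewrite -[p%:F]divr1 -tofrac1 rf_negE ?oner_neq0 // /ng comp_polyC tofrac1 divr1.
Qed.

Lemma rf_neg1 : @rf_neg R 1 = 1.
Proof. by rewrite -tofrac1 rf_negC /ng comp_polyC. Qed.

Lemma rf_neg_zmod : zmod_morphism (@rf_neg R : F -> F).
Proof.
move=> f g; rewrite rf_negD; congr (_ + _).
have h : rf_neg (- g) + rf_neg g = 0.
  by rewrite -rf_negD addNr -tofrac0 rf_negC /ng comp_poly0.
by apply/eqP; rewrite -subr_eq0 opprK h.
Qed.

HB.instance Definition _ := GRing.isZmodMorphism.Build F F (@rf_neg R) rf_neg_zmod.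
HB.instance Definition _ := GRing.isMonoidMorphism.Build F F (@rf_neg R)
  (conj rf_neg1 rf_negM).

End RfNeg.

Local Close Scope quotient_scope.

Section P1.
Variable R : rcfType.
Local Notation F := (ratf R).

Lemma cmxE m n (M : 'M[R]_(m, n)) : cmx M = map_mx (@FracField.tofrac _ \o polyC) M.
Proof. by []. Qed.

Lemma mapneg_cmx m n (M : 'M[R]_(m, n)) : map_mx (@rf_neg R) (cmx M) = cmx M.
Proof. by apply/matrixP => i j; rewrite !mxE rf_negC /ng comp_polyC. Qed.

Lemma mapneg_xi : @rf_neg R (xi_rf R) = - xi_rf R.
Proof.
rewrite /xi_rf rf_negC /ng comp_polyX.
by rewrite tofracN.
Qed.

Lemma cmxM m n p (M : 'M[R]_(m, n)) (N : 'M[R]_(n, p)) : cmx (M *m N) = cmx M *m cmx N.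
Proof. by rewrite !cmxE map_mxM. Qed.
Lemma cmxD m n (M N : 'M[R]_(m, n)) : cmx (M + N) = cmx M + cmx N.
Proof. by rewrite !cmxE map_mxD. Qed.
Lemma cmxN m n (M : 'M[R]_(m, n)) : cmx (- M) = - cmx M.
Proof. by rewrite !cmxE map_mxN. Qed.
Lemma cmxT m n (M : 'M[R]_(m, n)) : cmx (M^T) = (cmx M)^T.
Proof. by rewrite !cmxE map_trmx. Qed.

End P1.

Section P1b.
Variable R : rcfType.
Local Notation F := (ratf R).

Lemma det_xiA d (A : 'M[R]_d) : \det ((xi_rf R)%:M - cmx A) = (char_poly A)%:F.
Proof.
rewrite /char_poly -det_map_mx /char_poly_mx map_mxB map_scalar_mx -map_mx_comp.
by [].
Qed.

Lemma unit_xiA d (A : 'M[R]_d) : (xi_rf R)%:M - cmx A \in unitmx.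
Proof.
rewrite unitmxE det_xiA unitfE tofrac_eq0; apply: monic_neq0; apply: char_poly_monic.
Qed.

Lemma zmod_fact (V : zmodType) (d1 d2 u v s t : V) :
  (d1 + d2) + (u - s) + ((v - t) + (s + t)) = (d1 + u) + (d2 + v).
Proof.
by rewrite [(v - t) + (s + t)]addrACA addNr addr0 -addrA [(u - s) + (v + s)]addrACA addNr addr0 addrACA.
Qed.

Lemma part1 d n r (A : 'M[R]_d) (B : 'M[R]_(d, n)) (C : 'M[R]_(n, d)) (D : 'M[R]_n)
  (X : 'M[R]_d) (L : 'M[R]_(r, d)) (W : 'M[R]_(r, n)) :
  X^T = X ->
  - A^T *m X - X *m A = L^T *m L ->
  C - B^T *m X = W^T *m L ->
  D + D^T = W^T *m W ->
  mxstar (tf A B L W) *m tf A B L W = tf A B C D + mxstar (tf A B C D).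
Proof.
move=> hX h1 h2 h3.
have uP := unit_xiA A.
have uQ : (- xi_rf R)%:M - cmx A \in unitmx.
  by rewrite -mapneg_xi -(mapneg_cmx A) -map_scalar_mx -map_mxB map_unitmx.
have starE m (M : 'M[R]_(m, n)) (N : 'M[R]_(m, d)) :
    mxstar (tf A B N M) = (cmx M)^T + (cmx B)^T *m (invmx ((- xi_rf R)%:M - cmx A))^T *m (cmx N)^T.
  rewrite /mxstar /tf map_mxD !map_mxM !mapneg_cmx map_invmx map_mxB map_scalar_mx /=.
  by rewrite mapneg_xi mapneg_cmx raddfD /= !trmx_mul mulmxA.
rewrite !starE /tf.
have QT : (invmx ((- xi_rf R)%:M - cmx A))^T *m ((- xi_rf R)%:M - cmx A)^T = 1%:M.
  by rewrite -trmx_mul (mulmxV uQ) trmx1.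
have PP : ((xi_rf R)%:M - cmx A) *m invmx ((xi_rf R)%:M - cmx A) = 1%:M.
  exact: (mulmxV uP).
set xi := xi_rf R.
set a := cmx A; set b := cmx B; set c := cmx C; set dd := cmx D.
set x := cmx X; set l := cmx L; set w := cmx W.
set P := invmx (xi%:M - a).
set Q := invmx ((- xi)%:M - a).
have hx : x^T = x by rewrite /x -cmxT hX.
have e1 : - a^T *m x - x *m a = l^T *m l.
  by rewrite /a /x /l -!cmxT -!cmxM -cmxN -cmxM -cmxN -cmxD h1.
have e2 : c - b^T *m x = w^T *m l.
  by rewrite /b /c /x /l /w -!cmxT -!cmxM -cmxN -cmxD h2.
have e3 : dd + dd^T = w^T *m w.
  by rewrite /dd /w -!cmxT -!cmxM -cmxD h3.
have ll : l^T *m l = ((- xi)%:M - a)^T *m x + x *m (xi%:M - a).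
  rewrite -e1 raddfB /= tr_scalar_mx mulmxBl mulmxBr mul_scalar_mx mul_mx_scalar.
  by rewrite scaleNr mulNmx addrACA addNr add0r.
have core : Q^T *m (l^T *m l) *m P = x *m P + Q^T *m x.
  by rewrite ll mulmxDr mulmxDl !mulmxA QT mul1mx -!mulmxA PP mulmx1.
have T2 : w^T *m (l *m P *m b) = c *m P *m b - b^T *m x *m P *m b.
  by rewrite !mulmxA -e2 !mulmxBl.
have lw : l^T *m w = c^T - x *m b.
  by rewrite -[l^T *m w]trmxK trmx_mul trmxK -e2 raddfB /= trmx_mul trmxK hx.
have T3 : b^T *m Q^T *m l^T *m w = b^T *m Q^T *m c^T - b^T *m Q^T *m x *m b.
  by rewrite -mulmxA lw mulmxBr !mulmxA.
have T4 : b^T *m Q^T *m l^T *m (l *m P *m b) = b^T *m x *m P *m b + b^T *m Q^T *m x *m b.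
  have -> : b^T *m Q^T *m l^T *m (l *m P *m b) = b^T *m (Q^T *m (l^T *m l) *m P) *m b.
    by rewrite !mulmxA.
  by rewrite core mulmxDr mulmxDl !mulmxA.
rewrite mulmxDl !mulmxDr T2 T3 T4 -e3.
exact: zmod_fact.
Qed.
End P1b.

Lemma rank_schur (K : fieldType) d r n (P : 'M[K]_d) (B : 'M[K]_(d, n))
  (L : 'M[K]_(r, d)) (W : 'M[K]_(r, n)) : P \in unitmx ->
  \rank (block_mx P (- B) L W) = (d + \rank (W + L *m invmx P *m B)%R)%N.
Proof.
move=> uP.
set S := W + L *m invmx P *m B.
have E : block_mx P (- B) L W =
   block_mx 1%:M 0 (L *m invmx P) 1%:M *m block_mx P 0 0 S
     *m block_mx 1%:M (- (invmx P *m B)) 0 1%:M.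
  rewrite !mulmx_block ?(mul0mx, mulmx0, mul1mx, mulmx1, addr0, add0r).
  rewrite -[L *m invmx P *m P]mulmxA (mulVmx uP) mulmx1.
  rewrite !mulmxN !mulmxA (mulmxV uP) mul1mx.
  by rewrite /S addrC addrK.
have u1 : block_mx 1%:M 0 (L *m invmx P) 1%:M \in unitmx.
  by rewrite unitmxE det_lblock !det1 mulr1 unitr1.
have u2 : block_mx 1%:M (- (invmx P *m B)) 0 1%:M \in unitmx.
  by rewrite unitmxE det_ublock !det1 mulr1 unitr1.
rewrite E mxrankMfree; last by rewrite row_free_unit.
rewrite -mxrank_tr trmx_mul mxrankMfree; last by rewrite row_free_unit unitmx_tr.
rewrite mxrank_tr (rank_diag_block_mx P S) (mxrank_unit uP) /S.
by [].
Qed.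

Section Cev.
Variable R : rcfType.
Variable z : R[i].

Definition cev (p : {poly R}) : R[i] := ceval p z.

Lemma cevE p : cev p = (map_poly (real_complex R) p).[z].
Proof. by []. Qed.

Lemma cev_zmod : zmod_morphism cev.
Proof. by move=> p q; rewrite !cevE rmorphB hornerD hornerN. Qed.

Lemma cev_monoid : monoid_morphism cev.
Proof.
split; first by rewrite cevE rmorph1 hornerC.
by move=> p q; rewrite !cevE rmorphM hornerM.
Qed.

HB.instance Definition _ := GRing.isZmodMorphism.Build {poly R} R[i] cev cev_zmod.
HB.instance Definition _ := GRing.isMonoidMorphism.Build {poly R} R[i] cev cev_monoid.

Lemma cevC c : cev c%:P = (c%:C)%C.
Proof. by rewrite cevE map_polyC hornerC. Qed.

Lemma cevX : cev 'X = z.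
Proof. by rewrite cevE map_polyX hornerX. Qed.

Lemma cev_cpm d (A : 'M[R]_d) : map_mx cev (char_poly_mx A) = z%:M - cplx_mx A.
Proof.
rewrite /char_poly_mx map_mxB map_scalar_mx /= cevX; congr (_ - _).
by apply/matrixP => i j; rewrite !mxE cevC.
Qed.

Lemma cev_cp d (A : 'M[R]_d) : cev (char_poly A) = \det (z%:M - cplx_mx A).
Proof. by rewrite -cev_cpm det_map_mx. Qed.

Lemma cev_polyC m n (M : 'M[R]_(m, n)) : map_mx cev (map_mx polyC M) = cplx_mx M.
Proof. by apply/matrixP => i j; rewrite !mxE cevC. Qed.

End Cev.

Lemma unit_zA (R : rcfType) d (A : 'M[R]_d) (z : R[i]) :
  (forall lam : R[i], eigenvalue (cplx_mx A) lam -> Re lam <= 0) ->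
  0 < Re z -> z%:M - cplx_mx A \in unitmx.
Proof.
move=> hA hz; rewrite unitmxE unitfE; apply/negP => /eqP h0.
have : eigenvalue (cplx_mx A) z.
  rewrite eigenvalue_root_char /cplx_mx.
  rewrite -(map_char_poly (real_complex R)) /root -cevE cev_cp h0 //.
by move/hA => h; have := lt_le_trans hz h; rewrite ltxx.
Qed.

Section Val.
Variable R : rcfType.

Lemma xiA_map d (A : 'M[R]_d) :
  (xi_rf R)%:M - cmx A = map_mx (@FracField.tofrac _) (char_poly_mx A).
Proof. by rewrite /char_poly_mx map_mxB map_scalar_mx -map_mx_comp. Qed.

Definition Nmx d n r (A : 'M[R]_d) (B : 'M[R]_(d, n)) (L : 'M[R]_(r, d)) :=
  map_mx polyC L *m \adj (char_poly_mx A) *m map_mx polyC B.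

Lemma tf_entry d n r (A : 'M[R]_d) (B : 'M[R]_(d, n)) (L : 'M[R]_(r, d))
  (W : 'M[R]_(r, n)) i j :
  tf A B L W i j = (((W i j)%:P * char_poly A + Nmx A B L i j)%:F) / (char_poly A)%:F.
Proof.
rewrite /tf /invmx unit_xiA det_xiA xiA_map -map_mx_adj.
rewrite -scalemxAr -scalemxAl.
have -> : cmx L *m map_mx (@FracField.tofrac _) (\adj (char_poly_mx A)) *m cmx B
   = map_mx (@FracField.tofrac _) (Nmx A B L).
  by rewrite /Nmx !map_mxM -!map_mx_comp.
have c0 : (char_poly A)%:F != 0 :> ratf R.
  by rewrite tofrac_eq0; apply: monic_neq0; apply: char_poly_monic.
rewrite !mxE tofracD tofracM mulrDl mulfK // mulrC.
by [].
Qed.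

Lemma tf_value d n r (A : 'M[R]_d) (B : 'M[R]_(d, n)) (L : 'M[R]_(r, d))
  (W : 'M[R]_(r, n)) (z : R[i]) : z%:M - cplx_mx A \in unitmx ->
  rmx_value_at (tf A B L W) z
    (cplx_mx W + cplx_mx L *m invmx (z%:M - cplx_mx A) *m cplx_mx B).
Proof.
move=> uz i j.
have c0 : cev z (char_poly A) != 0 by rewrite cev_cp -unitfE -unitmxE.
exists ((W i j)%:P * char_poly A + Nmx A B L i j), (char_poly A); split => //.
  exact: tf_entry.
change ((cplx_mx W + cplx_mx L *m invmx (z%:M - cplx_mx A) *m cplx_mx B) i j =
  cev z ((W i j)%:P * char_poly A + Nmx A B L i j) / cev z (char_poly A)).
rewrite /invmx uz -cev_cp -scalemxAr -scalemxAl.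
have -> : cplx_mx L *m \adj (z%:M - cplx_mx A) *m cplx_mx B = map_mx (cev z) (Nmx A B L).
  by rewrite /Nmx !map_mxM map_mx_adj cev_cpm !cev_polyC.
rewrite !mxE rmorphD rmorphM /= cevC mulrDl mulfK // mulrC.
by [].
Qed.

Lemma value_uniq (f : ratf R) (z : R[i]) v v' :
  rf_value_at f z v -> rf_value_at f z v' -> v = v'.
Proof.
move=> [p [q [q0 -> ->]]] [p' [q' [q0' e ->]]].
have qn0 : q != 0 by apply: contraNneq q0 => ->; rewrite /ceval map_poly0 horner0.
have qn0' : q' != 0 by apply: contraNneq q0' => ->; rewrite /ceval map_poly0 horner0.
move/eqP: e; rewrite eqr_div ?tofrac_eq0 // -!tofracM tofrac_eq => /eqP e.
apply/eqP; rewrite eqr_div //.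
change (cev z p * cev z q' == cev z p' * cev z q).
by rewrite -!rmorphM e.
Qed.

End Val.
End Helpers.
Import Helpers.

Theorem lemmaD1 (R : rcfType) (d n r : nat)
  (A : 'M[R]_d) (B : 'M[R]_(d, n)) (C : 'M[R]_(n, d)) (D : 'M[R]_n)
  (X : 'M[R]_d) (L : 'M[R]_(r, d)) (W : 'M[R]_(r, n)) :
  (forall lam : R[i], eigenvalue (cplx_mx A) lam -> Re lam <= 0) ->
  X^T = X ->
  - A^T *m X - X *m A = L^T *m L ->
  C - B^T *m X = W^T *m L ->
  D + D^T = W^T *m W ->
  let H := tf A B C D in
  let Z := tf A B L W in
  mxstar Z *m Z = H + mxstar H /\
  (spectral_factor Z (H + mxstar H) <->
   forall lam : R[i], 0 < Re lam ->
     \rank (block_mx (lam%:M - cplx_mx A) (- cplx_mx B)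
                     (cplx_mx L) (cplx_mx W)) = (d + r)%N).
Proof.
move=> hA hX h1 h2 h3 H Z.
have P1 : mxstar Z *m Z = H + mxstar H by exact: part1 hX h1 h2 h3.
split; first exact: P1.
split.
  move=> [_ hs] lam hl.
  have uz := unit_zA hA hl.
  have [M [hv hr]] := hs lam hl.
  have eM : M = cplx_mx W + cplx_mx L *m invmx (lam%:M - cplx_mx A) *m cplx_mx B.
    apply/matrixP => i j; exact: value_uniq (hv i j) (tf_value B L W uz i j).
  by rewrite rank_schur // -eM hr.
move=> hY; split; first exact: P1.
move=> lam hl.
have uz := unit_zA hA hl.
exists (cplx_mx W + cplx_mx L *m invmx (lam%:M - cplx_mx A) *m cplx_mx B); split.
  exact: tf_value.
by have := hY lam hl; rewrite rank_schur // => /addnI.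
Qed.
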